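(* Let $H=(v_1,\dots,v_6)$ be an embedded equilateral hexagon, considered up to translations and rotations, whose action-angle coordinates $(d_1,d_2,d_3,\theta_1,\theta_2,\theta_3)$ for the $T_{135}$ triangulation are defined. If $J(H)=(-1,1)$, then $\theta_i\in(0,\pi)$ for all $i\in\{1,2,3\}$, and $\theta_1+\theta_2<\pi$, $\theta_1+\theta_3<\pi$, $\theta_2+\theta_3<\pi$.
   Context: An equilateral hexagon is an ordered 6-tuple $H=(v_1,\dots,v_6)$ in $\mathbb{R}^3$ with $\|v_i-v_{i+1}\|=1$ (indices mod 6), edges $e_i=[v_i,v_{i+1}]$, oriented $v_1\to v_2\to\cdots\to v_6\to v_1$; embedded means non-adjacent edges are disjoint and adjacent ones meet only at their common endpoint. Standard position: $v_1=0$, $v_3$ on the positive $x$-axis, $v_5$ in the $xy$-plane with positive $y$-coordinate. Action-angle coordinates ($T_{135}$ triangulation), defined when $v_1,v_3,v_5$ are not collinear and $0<d_i<2$: $d_1=\|v_3-v_1\|$, $d_2=\|v_5-v_3\|$, $d_3=\|v_1-v_5\|$; with $m_1,m_2,m_3$ the midpoints of $[v_1,v_3],[v_3,v_5],[v_5,v_1]$, $u_1,u_2,u_3$ the unit vectors in the $xy$-plane perpendicular to these segments pointing toward the opposite vertex of triangle $v_1v_3v_5$ (toward $v_5,v_1,v_3$ respectively), and $e_z=(0,0,1)$, the angles $\theta_i\in[0,2\pi)$ are determined by $v_{2i}=m_i+\tfrac12\sqrt{4-d_i^2}(\cos\theta_i\,u_i+\sin\theta_i\,e_z)$ (regular planar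 hexagon: all $\theta_i=\pi$). Joint Chirality-Curl: $curl(H)=\operatorname{sign}\big((v_3-v_1)\times(v_5-v_1)\cdot(v_2-v_1)\big)$. For $i=2,4,6$, $T_i$ is the open triangular disk with vertices $v_{i-1},v_i,v_{i+1}$, oriented by the right-hand rule (normal $(v_i-v_{i-1})\times(v_{i+1}-v_i)$), and $\Delta_i$ is the algebraic intersection number of $T_i$ with the oriented polygon $H$. Then $J(H)=(\Delta_2\Delta_4\Delta_6,\ \Delta_2^2\Delta_4^2\Delta_6^2\,curl(H))$. *)

(* Defs.v *)
From Stdlib Require Import Reals Lra ZArith List ClassicalEpsilon.
Open Scope R_scope.

Record vec3 := V3 { vx : R; vy : R; vz : R }.

Definition vadd (a b : vec3) : vec3 := V3 (vx a + vx b) (vy a + vy b) (vz a + vz b).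
Definition vsub (a b : vec3) : vec3 := V3 (vx a - vx b) (vy a - vy b) (vz a - vz b).
Definition vscale (c : R) (a : vec3) : vec3 := V3 (c * vx a) (c * vy a) (c * vz a).
Definition dot (a b : vec3) : R := vx a * vx b + vy a * vy b + vz a * vz b.
Definition cross (a b : vec3) : vec3 :=
  V3 (vy a * vz b - vz a * vy b) (vz a * vx b - vx a * vz b) (vx a * vy b - vy a * vx b).
Definition vnorm (a : vec3) : R := sqrt (dot a a).
Definition vzero : vec3 := V3 0 0 0.
Definition ez : vec3 := V3 0 0 1.
Definition midpoint (P Q : vec3) : vec3 := vscale (1/2) (vadd P Q).

(** A hexagon: [vtx H i] is v_i, indices taken mod 6 (v_1 = H 0, ..., v_6 = H 5,
    v_7 = v_1, v_0 = v_6).  Only H 0 .. H 5 matter. *)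
Definition hexagon := nat -> vec3.
Definition vtx (H : hexagon) (i : nat) : vec3 := H ((i + 5) mod 6)%nat.

Definition equilateral (H : hexagon) : Prop :=
  forall i : nat, (1 <= i <= 6)%nat -> vnorm (vsub (vtx H (S i)) (vtx H i)) = 1.

Definition on_seg (a b p : vec3) : Prop :=
  exists t : R, 0 <= t <= 1 /\ p = vadd a (vscale t (vsub b a)).

Definition on_edge (H : hexagon) (i : nat) (p : vec3) : Prop :=
  on_seg (vtx H i) (vtx H (S i)) p.

(** Embedded: non-adjacent edges are disjoint, adjacent edges meet only in their
    common endpoint. *)
Definition embedded (H : hexagon) : Prop :=
  forall (i j : nat) (p : vec3), (1 <= i <= 6)%nat -> (1 <= j <= 6)%nat -> i <> j ->
    on_edge H i p -> on_edge H j p ->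
    ((j mod 6 = (S i) mod 6)%nat /\ p = vtx H (S i)) \/
    ((i mod 6 = (S j) mod 6)%nat /\ p = vtx H i).

Definition standard_position (H : hexagon) : Prop :=
  vtx H 1 = vzero /\
  vy (vtx H 3) = 0 /\ vz (vtx H 3) = 0 /\ 0 < vx (vtx H 3) /\
  vz (vtx H 5) = 0 /\ 0 < vy (vtx H 5).

Definition collinear (a b c : vec3) : Prop := cross (vsub b a) (vsub c a) = vzero.

(** diagonal lengths d_1 = |v_3 - v_1|, d_2 = |v_5 - v_3|, d_3 = |v_1 - v_5| *)
Definition diag (H : hexagon) (i : nat) : R :=
  vnorm (vsub (vtx H (2 * i + 1)) (vtx H (2 * i - 1))).

Definition aa_defined (H : hexagon) : Prop :=
  ~ collinear (vtx H 1) (vtx H 3) (vtx H 5) /\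
  forall i : nat, (1 <= i <= 3)%nat -> 0 < diag H i < 2.

Definition inward_normal (u P Q O : vec3) : Prop :=
  vz u = 0 /\ vnorm u = 1 /\ dot u (vsub Q P) = 0 /\
  0 < dot u (vsub O (midpoint P Q)).

Definition theta_coord (H : hexagon) (i : nat) (theta : R) : Prop :=
  0 <= theta < 2 * PI /\
  exists u : vec3,
    inward_normal u (vtx H (2 * i - 1)) (vtx H (2 * i + 1)) (vtx H (2 * i + 3)) /\
    vtx H (2 * i) =
      vadd (midpoint (vtx H (2 * i - 1)) (vtx H (2 * i + 1)))
           (vscale (1/2 * sqrt (4 - diag H i ^ 2))
                   (vadd (vscale (cos theta) u) (vscale (sin theta) ez))).

Definition sgnZ (x : R) : Z :=
  if Rlt_dec 0 x then 1%Z else if Rlt_dec x 0 then (-1)%Z else 0%Z.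

Definition curl (H : hexagon) : Z :=
  sgnZ (dot (cross (vsub (vtx H 3) (vtx H 1)) (vsub (vtx H 5) (vtx H 1)))
            (vsub (vtx H 2) (vtx H 1))).

Definition in_open_tri (A B C p : vec3) : Prop :=
  exists a b c : R, 0 < a /\ 0 < b /\ 0 < c /\ a + b + c = 1 /\
    p = vadd (vadd (vscale a A) (vscale b B)) (vscale c C).

(** Crossings of the plane of the triangle are counted
    with the standard half-open convention (an edge crosses upward iff
    h(a) <= 0 < h(b), downward iff h(b) <= 0 < h(a), where h is the signed
    height over the plane), so that a transverse passage through a vertex is
    counted once and a tangential touch is counted zero; the crossing counts
    iff its point lies in the open triangle. *)
Definition crossing_contrib (A B C a b : vec3) : Z :=
  let n := cross (vsub B A) (vsub C B) in
  let ha := dot n (vsub a A) in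
  let hb := dot n (vsub b A) in
  let p := vadd a (vscale (ha / (ha - hb)) (vsub b a)) in
  if excluded_middle_informative (in_open_tri A B C p) then
    (if Rle_dec ha 0 then (if Rlt_dec 0 hb then 1%Z else 0%Z)
     else (if Rle_dec hb 0 then (-1)%Z else 0%Z))
  else 0%Z.

Definition Delta (H : hexagon) (i : nat) : Z :=
  fold_right Z.add 0%Z
    (map (fun j => crossing_contrib (vtx H (i - 1)) (vtx H i) (vtx H (S i))
                                    (vtx H j) (vtx H (S j)))
         (seq 1 6)).

Definition JCC (H : hexagon) : Z * Z :=
  ((Delta H 2 * Delta H 4 * Delta H 6)%Z,
   (Delta H 2 ^ 2 * Delta H 4 ^ 2 * Delta H 6 ^ 2 * curl H)%Z).

(* Main.v *)
Require Import Defs.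
From Stdlib Require Import Reals ZArith Lra Psatz Lia ClassicalEpsilon.
Open Scope R_scope.

Lemma contrib_cases A B C a b :
  let n := cross (vsub B A) (vsub C B) in
  let ha := dot n (vsub a A) in let hb := dot n (vsub b A) in
  crossing_contrib A B C a b = 0%Z \/
  (crossing_contrib A B C a b = 1%Z /\ ha <= 0 /\ 0 < hb /\
     in_open_tri A B C (vadd a (vscale (ha/(ha-hb)) (vsub b a)))) \/
  (crossing_contrib A B C a b = (-1)%Z /\ hb <= 0 /\ 0 < ha /\
     in_open_tri A B C (vadd a (vscale (ha/(ha-hb)) (vsub b a)))).
Proof.
  intros n ha hb. unfold crossing_contrib.
  fold n. fold ha. fold hb.
  destruct (excluded_middle_informative _) as [Hin|Hin]; [|now left].
  destruct (Rle_dec ha 0); destruct (Rlt_dec 0 hb); try (now left);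
  try destruct (Rle_dec hb 0); try (now left);
  first [ (right; left; repeat split; auto; lra) | (right; right; repeat split; auto; lra) ].
Qed.

Lemma t_range ha hb : (ha <= 0 /\ 0 < hb) \/ (hb <= 0 /\ 0 < ha) ->
  0 <= ha/(ha-hb) <= 1.
Proof.
  intros H. assert (Hd: ha - hb <> 0) by lra.
  set (t := ha/(ha-hb)).
  assert (Ht: t*(ha-hb) = ha) by (unfold t; field; auto).
  destruct H as [[H1 H2]|[H1 H2]]; split; nra.
Qed.

Lemma tri_vertex_C A B C : in_open_tri A B C C -> cross (vsub B A) (vsub C B) = vzero.
Proof.
  intros [a [b [c [Ha [Hb [Hc [Hs E]]]]]]].
  destruct A as [ax ay az], B as [bx by0 bz], C as [cx cy cz].
  unfold vadd, vscale in E. simpl in E. injection E as E1 E2 E3.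
  unfold cross, vsub, vzero; simpl.
  assert (c = 1 - a - b) by lra. subst c.
  assert (F1: a*(ax-cx) + b*(bx-cx) = 0) by (idtac; lra).
  assert (F2: a*(ay-cy) + b*(by0-cy) = 0) by nra.
  assert (F3: a*(az-cz) + b*(bz-cz) = 0) by nra.
  f_equal.
  - apply (Rmult_eq_reg_l a); [|lra].
    transitivity ((a*(ay-cy)+b*(by0-cy))*(bz-cz) - (a*(az-cz)+b*(bz-cz))*(by0-cy)); [ring| rewrite F2, F3; ring].
  - apply (Rmult_eq_reg_l a); [|lra].
    transitivity ((a*(az-cz)+b*(bz-cz))*(bx-cx) - (a*(ax-cx)+b*(bx-cx))*(bz-cz)); [ring| rewrite F1, F3; ring].
  - apply (Rmult_eq_reg_l a); [|lra].
    transitivity ((a*(ax-cx)+b*(bx-cx))*(by0-cy) - (a*(ay-cy)+b*(by0-cy))*(bx-cx)); [ring| rewrite F1, F2; ring].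
Qed.

Lemma tri_vertex_A A B C : in_open_tri A B C A -> cross (vsub B A) (vsub C B) = vzero.
Proof.
  intros [a [b [c [Ha [Hb [Hc [Hs E]]]]]]].
  destruct A as [ax ay az], B as [bx by0 bz], C as [cx cy cz].
  unfold vadd, vscale in E. simpl in E. injection E as E1 E2 E3.
  unfold cross, vsub, vzero; simpl.
  assert (a = 1 - b - c) by lra. subst a.
  assert (F1: b*(bx-ax) + c*(cx-ax) = 0) by lra.
  assert (F2: b*(by0-ay) + c*(cy-ay) = 0) by lra.
  assert (F3: b*(bz-az) + c*(cz-az) = 0) by lra.
  f_equal.
  - apply (Rmult_eq_reg_l b); [|lra].
    transitivity ((b*(by0-ay)+c*(cy-ay))*(cz-az) - (b*(bz-az)+c*(cz-az))*(cy-ay)); [ring| rewrite F2, F3; ring].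
  - apply (Rmult_eq_reg_l b); [|lra].
    transitivity ((b*(bz-az)+c*(cz-az))*(cx-ax) - (b*(bx-ax)+c*(cx-ax))*(cz-az)); [ring| rewrite F1, F3; ring].
  - apply (Rmult_eq_reg_l b); [|lra].
    transitivity ((b*(bx-ax)+c*(cx-ax))*(cy-ay) - (b*(by0-ay)+c*(cy-ay))*(cx-ax)); [ring| rewrite F1, F2; ring].
Qed.

Lemma contrib_same A B C a b :
  let n := cross (vsub B A) (vsub C B) in
  let ha := dot n (vsub a A) in let hb := dot n (vsub b A) in
  ((ha <= 0 /\ hb <= 0) \/ (0 < ha /\ 0 < hb)) -> crossing_contrib A B C a b = 0%Z.
Proof.
  intros n ha hb H.
  destruct (contrib_cases A B C a b) as [E|[[E [H1 [H2 _]]]|[E [H1 [H2 _]]]]]; auto;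
  fold n ha hb in H1, H2; lra.
Qed.

Lemma Z_AB A B C : crossing_contrib A B C A B = 0%Z.
Proof.
  apply contrib_same. left.
  destruct A, B, C; unfold dot, cross, vsub; simpl. split; right; ring.
Qed.

Lemma Z_BC A B C : crossing_contrib A B C B C = 0%Z.
Proof.
  apply contrib_same. left.
  destruct A, B, C; unfold dot, cross, vsub; simpl. split; right; ring.
Qed.

Lemma dot_zero_l v : dot vzero v = 0.
Proof. destruct v; unfold dot, vzero; simpl; ring. Qed.

Lemma Z_C A B C b : crossing_contrib A B C C b = 0%Z.
Proof.
  assert (Hc: dot (cross (vsub B A) (vsub C B)) (vsub C A) = 0)
    by (destruct A, B, C; unfold dot, cross, vsub; simpl; ring).
  destruct (contrib_cases A B C C b) as [E|[[E [H1 [H2 Hin]]]|[E [H1 [H2 Hin]]]]]; auto;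
  simpl in H1, H2, Hin; rewrite Hc in *; try lra.
  replace (vadd C (vscale (0 / (0 - dot (cross (vsub B A) (vsub C B)) (vsub b A))) (vsub b C))) with C in Hin.
  - apply tri_vertex_C in Hin. rewrite Hin, dot_zero_l in H2. lra.
  - destruct C, b; unfold vadd, vscale, vsub; simpl. f_equal; unfold Rdiv; ring.
Qed.

Lemma Z_A A B C a : crossing_contrib A B C a A = 0%Z.
Proof.
  assert (Hc: dot (cross (vsub B A) (vsub C B)) (vsub A A) = 0)
    by (destruct A, B, C; unfold dot, cross, vsub; simpl; ring).
  destruct (contrib_cases A B C a A) as [E|[[E [H1 [H2 Hin]]]|[E [H1 [H2 Hin]]]]]; auto;
  simpl in H1, H2, Hin; rewrite Hc in *; try lra.
  set (ha := dot (cross (vsub B A) (vsub C B)) (vsub a A)) in *.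
  replace (vadd a (vscale (ha / (ha - 0)) (vsub A a))) with A in Hin.
  - apply tri_vertex_A in Hin. unfold ha in H2. rewrite Hin, dot_zero_l in H2. lra.
  - destruct A, a; unfold vadd, vscale, vsub; simpl. f_equal; field; lra.
Qed.



Lemma flap (ax ay bx by0 cx cy ux uy wx wy r c s r' c' s' al be ga t px py pz : R) :
  ux*(bx-ax)+uy*(by0-ay) = 0 ->
  0 < ux*(cx-bx)+uy*(cy-by0) ->
  wx*(cx-bx)+wy*(cy-by0) = 0 ->
  0 < wx*(ax-bx)+wy*(ay-by0) ->
  ux*ux+uy*uy = 1 -> wx*wx+wy*wy = 1 ->
  0<r -> 0<r' -> 0<s -> 0<al -> 0<be -> 0<ga -> al+be+ga=1 -> 0<=t<=1 ->
  px = al*ax + be*((ax+bx)/2 + r*c*ux) + ga*bx ->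
  py = al*ay + be*((ay+by0)/2 + r*c*uy) + ga*by0 ->
  pz = be*(r*s) ->
  px = (bx+cx)/2 + r'*c'*wx + t*(cx - ((bx+cx)/2 + r'*c'*wx)) ->
  py = (by0+cy)/2 + r'*c'*wy + t*(cy - ((by0+cy)/2 + r'*c'*wy)) ->
  pz = r'*s' - t*(r'*s') ->
  0 < s' /\ 0 < c*s' + s*c'.
Proof.
  intros Hu0 Hu1 Hw0 Hw1 Hun Hwn Hr Hr' Hs Hal Hbe Hga Hsum Ht Hx1 Hy1 Hz1 Hx2 Hy2 Hz2.
  assert (Hga' : ga = 1 - al - be) by lra. subst ga.
  assert (HZ : be*r*s = (1-t)*r'*s') by (transitivity pz; [rewrite Hz1; ring | rewrite Hz2; ring]).
  assert (HZp : 0 < be*r*s) by (apply Rmult_lt_0_compat; [apply Rmult_lt_0_compat|]; lra).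
  assert (Hs' : 0 < s').
  { destruct (Rle_lt_dec s' 0) as [Hle|Hlt]; auto.
    assert ((1-t)*r'*s' <= 0).
    { assert (0 <= (1-t)*r') by (apply Rmult_le_pos; lra).
      rewrite Rmult_assoc. nra. }
    lra. }
  assert (Ht1 : 0 < 1 - t).
  { destruct (Rle_lt_dec (1-t) 0); auto.
    assert (1 - t = 0) by lra. rewrite H in HZ. lra. }
  split; auto.
  set (K1 := be*r*c). set (K2 := (1-t)*r'*c').
  set (A' := al + be/2). set (T := (1+t)/2).
  assert (ex : A'*(ax-bx) + K1*ux = T*(cx-bx) + K2*wx).
  { transitivity (px - bx). rewrite Hx1. unfold A', K1. field.
    rewrite Hx2. unfold T, K2. field. }
  assert (ey : A'*(ay-by0) + K1*uy = T*(cy-by0) + K2*wy).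
  { transitivity (py - by0). rewrite Hy1. unfold A', K1. field.
    rewrite Hy2. unfold T, K2. field. }
  set (k := ux*wx + uy*wy).
  assert (E1 : K1 = T*(ux*(cx-bx)+uy*(cy-by0)) + K2*k).
  { transitivity (ux*(A'*(ax-bx) + K1*ux) + uy*(A'*(ay-by0) + K1*uy)).
    - transitivity (K1*(ux*ux+uy*uy) - A'*(ux*(bx-ax)+uy*(by0-ay))).
      + rewrite Hun, Hu0. ring.
      + ring.
    - rewrite ex, ey. unfold k. ring. }
  assert (E2 : K2 = A'*(wx*(ax-bx)+wy*(ay-by0)) + K1*k).
  { transitivity (wx*(T*(cx-bx) + K2*wx) + wy*(T*(cy-by0) + K2*wy)).
    - transitivity (K2*(wx*wx+wy*wy) + T*(wx*(cx-bx)+wy*(cy-by0))).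
      + rewrite Hwn, Hw0. ring.
      + ring.
    - rewrite <- ex, <- ey. unfold k. ring. }
  assert (Hk : 0 <= 1 - k).
  { assert (0 <= (ux-wx)*(ux-wx) + (uy-wy)*(uy-wy))
      by (apply Rplus_le_le_0_compat; apply Rle_0_sqr).
    unfold k. lra. }
  assert (HA : 0 < A') by (unfold A'; lra).
  assert (HT : 0 < T) by (unfold T; lra).
  assert (HS : (K1+K2)*(1-k) = T*(ux*(cx-bx)+uy*(cy-by0)) + A'*(wx*(ax-bx)+wy*(ay-by0))).
  { clearbody K1 K2 A' T k. lra. }
  assert (HKp : 0 < K1 + K2).
  { assert (0 < (K1+K2)*(1-k)) by (rewrite HS; nra).
    destruct (Rle_lt_dec (K1+K2) 0); auto. nra. }
  assert (Hid : (be*r)*((1-t)*r')*(c*s' + s*c') = K1*((1-t)*r'*s') + (be*r*s)*K2).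
  { unfold K1, K2. ring. }
  rewrite HZ in Hid.
  replace (K1 * ((1 - t) * r' * s') + (1 - t) * r' * s' * K2) with (((1-t)*r'*s')*(K1+K2)) in Hid by ring.
  assert (Hpos : 0 < (be*r)*((1-t)*r')).
  { apply Rmult_lt_0_compat; apply Rmult_lt_0_compat; lra. }
  assert (0 < (be*r)*((1-t)*r')*(c*s' + s*c')).
  { rewrite Hid. apply Rmult_lt_0_compat; [lra|auto]. }
  destruct (Rle_lt_dec (c*s'+s*c') 0); auto. nra.
Qed.

Lemma unit_dot u : vnorm u = 1 -> vx u * vx u + vy u * vy u + vz u * vz u = 1.
Proof.
  unfold vnorm, dot. intros E.
  assert (0 <= vx u * vx u + vy u * vy u + vz u * vz u) by nra.
  rewrite <- (sqrt_sqrt _ H). rewrite E. ring.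
Qed.

Lemma tri_lemma A B C X Y Z u v w rX rY rZ cX sX cY sY cZ sZ :
  vz A = 0 -> vz B = 0 -> vz C = 0 ->
  0 < vz (cross (vsub B A) (vsub C A)) ->
  inward_normal u A B C -> inward_normal v B C A -> inward_normal w C A B ->
  0 < rX -> 0 < rY -> 0 < rZ ->
  X = vadd (midpoint A B) (vscale rX (vadd (vscale cX u) (vscale sX ez))) ->
  Y = vadd (midpoint B C) (vscale rY (vadd (vscale cY v) (vscale sY ez))) ->
  Z = vadd (midpoint C A) (vscale rZ (vadd (vscale cZ w) (vscale sZ ez))) ->
  0 < sX ->
  (crossing_contrib A X B Y C = 0%Z \/
     (crossing_contrib A X B Y C = 1%Z /\ 0 < sY /\ 0 < cX*sY + sX*cY)) /\
  (crossing_contrib A X B C Z = 0%Z \/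
     (crossing_contrib A X B C Z = (-1)%Z /\ 0 < sZ /\ 0 < cX*sZ + sX*cZ)).
Proof.
  intros HA HB HC Hor [Hu0 [Hu1 [Hu2 Hu3]]] [Hv0 [Hv1 [Hv2 Hv3]]] [Hw0 [Hw1 [Hw2 Hw3]]]
    HrX HrY HrZ EX EY EZ HsX.
  apply unit_dot in Hu1. apply unit_dot in Hv1. apply unit_dot in Hw1.
  assert (HhC : dot (cross (vsub X A) (vsub B X)) (vsub C A) = rX * sX * vz (cross (vsub B A) (vsub C A))).
  { subst X. destruct A, B, C, u; simpl in *; subst.
    unfold dot, cross, vsub, vadd, vscale, midpoint, ez; simpl. ring. }
  assert (HhCp : 0 < dot (cross (vsub X A) (vsub B X)) (vsub C A)).
  { rewrite HhC. apply Rmult_lt_0_compat; [apply Rmult_lt_0_compat|]; auto. }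
  clear HhC Hor.
  subst X Y Z.
  destruct A as [ax ay az], B as [bx by0 bz], C as [cx cy cz], u as [ux uy uz],
    v as [vx0 vy0 vz0], w as [wx wy wz].
  simpl in HA, HB, HC, Hu0, Hv0, Hw0. subst az bz cz uz vz0 wz.
  unfold dot, vsub, midpoint, vadd, vscale in Hu2, Hu3, Hv2, Hv3, Hw2, Hw3.
  simpl in Hu1, Hv1, Hw1, Hu2, Hu3, Hv2, Hv3, Hw2, Hw3.
  split.
  - destruct (contrib_cases (V3 ax ay 0) (vadd (midpoint (V3 ax ay 0) (V3 bx by0 0))
          (vscale rX (vadd (vscale cX (V3 ux uy 0)) (vscale sX ez)))) (V3 bx by0 0)
          (vadd (midpoint (V3 bx by0 0) (V3 cx cy 0))
          (vscale rY (vadd (vscale cY (V3 vx0 vy0 0)) (vscale sY ez)))) (V3 cx cy 0))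
      as [E|[[E [H1 [H2 Hin]]]|[E [H1 [H2 Hin]]]]].
    + now left.
    + right. split; auto.
      pose proof (t_range _ _ (or_introl (conj H1 H2))) as Ht.
      set (t := _ / _) in Hin, Ht. clearbody t.
      destruct Hin as [al [be [ga [Hal [Hbe [Hga [Hs Ep]]]]]]].
      unfold vadd, vscale, vsub, midpoint, ez in Ep. simpl in Ep.
      injection Ep as Epx Epy Epz.
      refine (flap ax ay bx by0 cx cy ux uy vx0 vy0 rX cX sX rY cY sY al be ga t
        (1 / 2 * (bx + cx) + rY * (cY * vx0 + sY * 0) + t * (cx - (1 / 2 * (bx + cx) + rY * (cY * vx0 + sY * 0))))
        (1 / 2 * (by0 + cy) + rY * (cY * vy0 + sY * 0) + t * (cy - (1 / 2 * (by0 + cy) + rY * (cY * vy0 + sY * 0))))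
        (1 / 2 * (0 + 0) + rY * (cY * 0 + sY * 1) + t * (0 - (1 / 2 * (0 + 0) + rY * (cY * 0 + sY * 1))))
        _ _ _ _ _ _ _ _ _ _ _ _ _ _ _ _ _ _ _ _); try lra; try ring.
    + exfalso. lra.
  - destruct (contrib_cases (V3 ax ay 0) (vadd (midpoint (V3 ax ay 0) (V3 bx by0 0))
          (vscale rX (vadd (vscale cX (V3 ux uy 0)) (vscale sX ez)))) (V3 bx by0 0)
          (V3 cx cy 0)
          (vadd (midpoint (V3 cx cy 0) (V3 ax ay 0))
          (vscale rZ (vadd (vscale cZ (V3 wx wy 0)) (vscale sZ ez)))))
      as [E|[[E [H1 [H2 Hin]]]|[E [H1 [H2 Hin]]]]].
    + now left.
    + exfalso. lra.
    + right. split; auto.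
      pose proof (t_range _ _ (or_intror (conj H1 H2))) as Ht.
      set (t := _ / _) in Hin, Ht. clearbody t.
      destruct Hin as [al [be [ga [Hal [Hbe [Hga [Hs Ep]]]]]]].
      unfold vadd, vscale, vsub, midpoint, ez in Ep. simpl in Ep.
      injection Ep as Epx Epy Epz.
      refine (flap bx by0 ax ay cx cy ux uy wx wy rX cX sX rZ cZ sZ ga be al (1-t)
        (1 / 2 * (cx + ax) + rZ * (cZ * wx + sZ * 0) + (1-t) * (cx - (1 / 2 * (cx + ax) + rZ * (cZ * wx + sZ * 0))))
        (1 / 2 * (cy + ay) + rZ * (cZ * wy + sZ * 0) + (1-t) * (cy - (1 / 2 * (cy + ay) + rZ * (cZ * wy + sZ * 0))))
        (1 / 2 * (0 + 0) + rZ * (cZ * 0 + sZ * 1) + (1-t) * (0 - (1 / 2 * (0 + 0) + rZ * (cZ * 0 + sZ * 1))))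
        _ _ _ _ _ _ _ _ _ _ _ _ _ _ _ _ _ _ _ _); try lra; try ring.
Qed.

Lemma ratio_lemma b c h1 h2 : (h1 <= 0 /\ 0 < h2) \/ (h2 <= 0 /\ 0 < h1) ->
  b*h1 + c*h2 = 0 ->
  b = (b+c)*(1 - h1/(h1-h2)) /\ c = (b+c)*(h1/(h1-h2)).
Proof.
  intros H E. assert (Hd : h1 - h2 <> 0) by lra.
  set (t := h1/(h1-h2)).
  assert (Ht: t*(h1-h2) = h1) by (unfold t; field; auto).
  clearbody t.
  split; apply (Rmult_eq_reg_r (h1-h2)); auto.
  - transitivity ((b+c)*(h1-h2) - (b+c)*(t*(h1-h2))); [|ring]. rewrite Ht. lra.
  - transitivity ((b+c)*(t*(h1-h2))); [|ring]. rewrite Ht. lra.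
Qed.

Lemma incompat_core P Q S U W :
  let n1 := cross (vsub Q P) (vsub S Q) in
  let hU := dot n1 (vsub U P) in let hW := dot n1 (vsub W P) in
  let n2 := cross (vsub U S) (vsub W U) in
  let gP := dot n2 (vsub P S) in let gQ := dot n2 (vsub Q S) in
  (hU <= 0 /\ 0 < hW) \/ (hW <= 0 /\ 0 < hU) ->
  (gP <= 0 /\ 0 < gQ) \/ (gQ <= 0 /\ 0 < gP) ->
  in_open_tri P Q S (vadd U (vscale (hU/(hU-hW)) (vsub W U))) ->
  in_open_tri S U W (vadd P (vscale (gP/(gP-gQ)) (vsub Q P))) -> False.
Proof.
  intros n1 hU hW n2 gP gQ HH GG T1 T2.
  set (t1 := hU/(hU-hW)) in *. set (t2 := gP/(gP-gQ)) in *.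
  set (p1 := vadd U (vscale t1 (vsub W U))) in *.
  set (p2 := vadd P (vscale t2 (vsub Q P))) in *.
  destruct T1 as [a [b [c [Ha [Hb [Hc [Hs Ep1]]]]]]].
  destruct T2 as [a' [b' [c' [Ha' [Hb' [Hc' [Hs' Ep2]]]]]]].
  assert (HA : b'*hU + c'*hW = 0).
  { transitivity (dot n1 (vsub p2 P)).
    - rewrite Ep2. assert (a' = 1 - b' - c') by lra. subst a'.
      unfold hU, hW, n1; destruct P, Q, S, U, W; unfold dot, cross, vsub, vadd, vscale; simpl; ring.
    - unfold p2, n1; destruct P, Q, S, U, W; unfold dot, cross, vsub, vadd, vscale; simpl; ring. }
  assert (HB : a*gP + b*gQ = 0).
  { transitivity (dot n2 (vsub p1 S)).
    - rewrite Ep1. assert (c = 1 - a - b) by lra. subst c.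
      unfold gP, gQ, n2; destruct P, Q, S, U, W; unfold dot, cross, vsub, vadd, vscale; simpl; ring.
    - unfold p1, n2; destruct P, Q, S, U, W; unfold dot, cross, vsub, vadd, vscale; simpl; ring. }
  destruct (ratio_lemma b' c' hU hW HH HA) as [Rb' Rc'].
  destruct (ratio_lemma a b gP gQ GG HB) as [Ra Rb].
  fold t1 in Rb', Rc'. fold t2 in Ra, Rb.
  assert (Hnu : 0 < b' + c' < 1) by lra.
  assert (Hmu : 0 < a + b < 1) by lra.
  assert (EG : vsub p2 S = vscale (b'+c') (vsub p1 S)).
  { rewrite Ep2. unfold p1. assert (a' = 1 - b' - c') by lra. subst a'.
    set (nu := b'+c') in *. clearbody nu. rewrite Rb', Rc'.
    destruct P, Q, S, U, W; unfold vsub, vadd, vscale; simpl; f_equal; ring. }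
  assert (ED : vsub p1 S = vscale (a+b) (vsub p2 S)).
  { rewrite Ep1. unfold p2. assert (c = 1 - a - b) by lra. subst c.
    set (mu := a+b) in *. clearbody mu. rewrite Ra, Rb.
    destruct P, Q, S, U, W; unfold vsub, vadd, vscale; simpl; f_equal; ring. }
  rewrite EG in ED.
  assert (Hp1 : p1 = S).
  { set (mu := a+b) in *. set (nu := b'+c') in *. clearbody mu nu.
    assert (Hmn : mu*nu < 1) by nra.
    clearbody p1. destruct p1 as [x y z], S as [sx sy sz].
    unfold vsub, vscale in ED; simpl in ED; injection ED as Ex Ey Ez.
    f_equal; nra. }
  assert (Hin : in_open_tri P Q S S).
  { exists a, b, c. repeat split; auto. transitivity p1; [symmetry; exact Hp1| exact Ep1]. }
  apply tri_vertex_C in Hin. fold n1 in Hin.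
  unfold hU, hW in HH. rewrite Hin, !dot_zero_l in HH. lra.
Qed.

Lemma incompat P Q S U W :
  crossing_contrib P Q S U W <> 0%Z -> crossing_contrib S U W P Q <> 0%Z -> False.
Proof.
  intros C1 C2.
  destruct (contrib_cases P Q S U W) as [E1|[[_ [H1 [H2 T1]]]|[_ [H1 [H2 T1]]]]];
    [contradiction| |];
  (destruct (contrib_cases S U W P Q) as [E2|[[_ [G1 [G2 T2]]]|[_ [G1 [G2 T2]]]]];
    [contradiction| |]).
  all: simpl in H1, H2, T1, G1, G2, T2.
  all: set (n1 := cross (vsub Q P) (vsub S Q)) in *.
  all: set (hU := dot n1 (vsub U P)) in *; set (hW := dot n1 (vsub W P)) in *.
  all: set (n2 := cross (vsub U S) (vsub W U)) in *.
  all: set (gP := dot n2 (vsub P S)) in *; set (gQ := dot n2 (vsub Q S)) in *.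
  all: assert (HH : (hU <= 0 /\ 0 < hW) \/ (hW <= 0 /\ 0 < hU)) by lra.
  all: assert (GG : (gP <= 0 /\ 0 < gQ) \/ (gQ <= 0 /\ 0 < gP)) by lra.
  all: clear H1 H2 G1 G2.
  all: revert T1 T2; generalize HH GG; clear C1 C2.
  all: apply incompat_core.
Qed.

Lemma trig_final a b : 0 <= a < 2*PI -> 0 <= b < 2*PI -> 0 < sin a -> 0 < sin b ->
  0 < cos a * sin b + sin a * cos b -> (0 < a < PI) /\ (0 < b < PI) /\ a + b < PI.
Proof.
  intros Ha Hb Sa Sb Sab.
  assert (Pa : 0 < a < PI).
  { split.
    - destruct (Rle_lt_dec a 0); auto. assert (a = 0) by lra. subst. rewrite sin_0 in Sa. lra.
    - destruct (Rle_lt_dec PI a); auto. pose proof (sin_le_0 a r). lra. }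
  assert (Pb : 0 < b < PI).
  { split.
    - destruct (Rle_lt_dec b 0); auto. assert (b = 0) by lra. subst. rewrite sin_0 in Sb. lra.
    - destruct (Rle_lt_dec PI b); auto. pose proof (sin_le_0 b r). lra. }
  repeat split; try lra.
  destruct (Rle_lt_dec PI (a+b)); auto.
  pose proof (sin_le_0 (a+b) r). rewrite sin_plus in H. lra.
Qed.

Lemma sgnZ_one x : sgnZ x = 1%Z -> 0 < x.
Proof.
  unfold sgnZ. destruct (Rlt_dec 0 x); auto. destruct (Rlt_dec x 0); discriminate.
Qed.

Lemma radius_pos d : 0 < d < 2 -> 0 < 1/2 * sqrt (4 - d^2).
Proof.
  intros Hd. apply Rmult_lt_0_compat; [lra|]. apply sqrt_lt_R0. nra.
Qed.

Theorem mainTheorem9 :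
  forall (H : hexagon) (theta1 theta2 theta3 : R),
    equilateral H -> embedded H -> standard_position H -> aa_defined H ->
    theta_coord H 1 theta1 -> theta_coord H 2 theta2 -> theta_coord H 3 theta3 ->
    JCC H = ((-1)%Z, 1%Z) ->
    (0 < theta1 < PI /\ 0 < theta2 < PI /\ 0 < theta3 < PI) /\
    theta1 + theta2 < PI /\ theta1 + theta3 < PI /\ theta2 + theta3 < PI.
Proof.
  intros H th1 th2 th3 _ _ Hstd Haa Ht1 Ht2 Ht3 HJ.
  unfold JCC in HJ. injection HJ as HJ1 HJ2.
  assert (Hcurl : curl H = 1%Z).
  { assert (HJ3 : ((Defs.Delta H 2 * Defs.Delta H 4 * Defs.Delta H 6) *
       (Defs.Delta H 2 * Defs.Delta H 4 * Defs.Delta H 6) * curl H = 1)%Z)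
      by (rewrite <- HJ2; unfold Z.pow_pos; simpl; ring).
    rewrite HJ1 in HJ3. lia. }
  clear HJ2.
  assert (D2 : Defs.Delta H 2 = (crossing_contrib (vtx H 1) (vtx H 2) (vtx H 3) (vtx H 4) (vtx H 5)
                           + crossing_contrib (vtx H 1) (vtx H 2) (vtx H 3) (vtx H 5) (vtx H 6))%Z).
  { unfold Defs.Delta. cbn [List.seq List.map List.fold_right Nat.sub]. change (vtx H 7) with (vtx H 1).
    rewrite Z_AB, Z_BC, Z_C, Z_A. lia. }
  assert (D4 : Defs.Delta H 4 = (crossing_contrib (vtx H 3) (vtx H 4) (vtx H 5) (vtx H 6) (vtx H 1)
                           + crossing_contrib (vtx H 3) (vtx H 4) (vtx H 5) (vtx H 1) (vtx H 2))%Z).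
  { unfold Defs.Delta. cbn [List.seq List.map List.fold_right Nat.sub]. change (vtx H 7) with (vtx H 1).
    rewrite Z_AB, Z_BC, Z_C, Z_A. lia. }
  assert (D6 : Defs.Delta H 6 = (crossing_contrib (vtx H 5) (vtx H 6) (vtx H 1) (vtx H 2) (vtx H 3)
                           + crossing_contrib (vtx H 5) (vtx H 6) (vtx H 1) (vtx H 3) (vtx H 4))%Z).
  { unfold Defs.Delta. cbn [List.seq List.map List.fold_right Nat.sub]. change (vtx H 7) with (vtx H 1).
    rewrite Z_AB, Z_BC, Z_C, Z_A. lia. }
  rewrite D2, D4, D6 in HJ1. clear D2 D4 D6.
  destruct Haa as [_ Hd].
  pose proof (Hd 1%nat ltac:(lia)) as Hd1.
  pose proof (Hd 2%nat ltac:(lia)) as Hd2.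
  pose proof (Hd 3%nat ltac:(lia)) as Hd3. clear Hd.
  pose proof (radius_pos _ Hd1) as Hr1.
  pose proof (radius_pos _ Hd2) as Hr2.
  pose proof (radius_pos _ Hd3) as Hr3.
  destruct Ht1 as [Hth1 [u1 [Hu1 E2]]].
  destruct Ht2 as [Hth2 [u2 [Hu2 E4]]].
  destruct Ht3 as [Hth3 [u3 [Hu3 E6]]].
  change (vtx H (2*1-1)) with (vtx H 1) in *.
  change (vtx H (2*1+1)) with (vtx H 3) in *.
  change (vtx H (2*1+3)) with (vtx H 5) in *.
  change (vtx H (2*1)) with (vtx H 2) in *.
  change (vtx H (2*2-1)) with (vtx H 3) in *.
  change (vtx H (2*2+1)) with (vtx H 5) in *.
  change (vtx H (2*2+3)) with (vtx H 1) in *.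
  change (vtx H (2*2)) with (vtx H 4) in *.
  change (vtx H (2*3-1)) with (vtx H 5) in *.
  change (vtx H (2*3+1)) with (vtx H 1) in *.
  change (vtx H (2*3+3)) with (vtx H 3) in *.
  change (vtx H (2*3)) with (vtx H 6) in *.
  unfold curl in Hcurl. apply sgnZ_one in Hcurl.
  set (r1 := 1/2 * sqrt (4 - diag H 1 ^ 2)) in *.
  set (r2 := 1/2 * sqrt (4 - diag H 2 ^ 2)) in *.
  set (r3 := 1/2 * sqrt (4 - diag H 3 ^ 2)) in *.
  clearbody r1 r2 r3. clear Hd1 Hd2 Hd3.
  set (c1 := cos th1) in *. set (s1 := sin th1) in *.
  set (c2 := cos th2) in *. set (s2 := sin th2) in *.
  set (c3 := cos th3) in *. set (s3 := sin th3) in *.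
  destruct Hstd as [S1 [S2 [S3 [S4 [S5 S6]]]]].
  set (v1 := vtx H 1) in *. set (v2 := vtx H 2) in *. set (v3 := vtx H 3) in *.
  set (v4 := vtx H 4) in *. set (v5 := vtx H 5) in *. set (v6 := vtx H 6) in *.
  clearbody v1 v2 v3 v4 v5 v6.
  assert (Hs1 : 0 < s1).
  { subst v1 v2. destruct Hu1 as [Hz _].
    destruct v3 as [x3 y3 z3], v5 as [x5 y5 z5], u1 as [a b c].
    simpl in *. subst.
    unfold dot, cross, vsub, vzero, vadd, vscale, midpoint, ez in Hcurl. simpl in Hcurl.
    assert (0 < x3 * y5) by (apply Rmult_lt_0_compat; auto).
    assert (Hq : 0 < (x3*y5) * (r1 * s1)) by (ring_simplify; ring_simplify in Hcurl; lra).
    destruct (Rle_lt_dec s1 0); auto.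
    assert (0 < r1 * s1) by (apply (Rmult_lt_reg_l (x3*y5)); lra). nra. }
  assert (Z1 : vz v1 = 0) by (rewrite S1; reflexivity).
  assert (O1 : 0 < vz (cross (vsub v3 v1) (vsub v5 v1))).
  { rewrite S1. destruct v3 as [x3 y3 z3], v5 as [x5 y5 z5]. simpl in *. subst.
    unfold cross, vsub, vzero; simpl. nra. }
  assert (O2 : 0 < vz (cross (vsub v5 v3) (vsub v1 v3))).
  { rewrite S1. destruct v3 as [x3 y3 z3], v5 as [x5 y5 z5]. simpl in *. subst.
    unfold cross, vsub, vzero; simpl. nra. }
  assert (O3 : 0 < vz (cross (vsub v1 v5) (vsub v3 v5))).
  { rewrite S1. destruct v3 as [x3 y3 z3], v5 as [x5 y5 z5]. simpl in *. subst.
    unfold cross, vsub, vzero; simpl. nra. }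
  pose proof (fun h => tri_lemma v1 v3 v5 v2 v4 v6 u1 u2 u3 r1 r2 r3 c1 s1 c2 s2 c3 s3
    Z1 S3 S5 O1 Hu1 Hu2 Hu3 Hr1 Hr2 Hr3 E2 E4 E6 h) as L2.
  pose proof (fun h => tri_lemma v3 v5 v1 v4 v6 v2 u2 u3 u1 r2 r3 r1 c2 s2 c3 s3 c1 s1
    S3 S5 Z1 O2 Hu2 Hu3 Hu1 Hr2 Hr3 Hr1 E4 E6 E2 h) as L4.
  pose proof (fun h => tri_lemma v5 v1 v3 v6 v2 v4 u3 u1 u2 r3 r1 r2 c3 s3 c1 s1 c2 s2
    S5 Z1 S3 O3 Hu3 Hu1 Hu2 Hr3 Hr1 Hr2 E6 E2 E4 h) as L6.
  assert (Fin : 0 < s2 -> 0 < s3 -> 0 < c1*s2 + s1*c2 -> 0 < c1*s3 + s1*c3 -> 0 < c2*s3 + s2*c3 ->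
    (0 < th1 < PI /\ 0 < th2 < PI /\ 0 < th3 < PI) /\
    th1 + th2 < PI /\ th1 + th3 < PI /\ th2 + th3 < PI).
  { intros Hs2 Hs3 H12 H13 H23. unfold c1, c2, c3, s1, s2, s3 in *.
    destruct (trig_final th1 th2 Hth1 Hth2 Hs1 Hs2 H12) as [A1 [A2 A12]].
    destruct (trig_final th1 th3 Hth1 Hth3 Hs1 Hs3 H13) as [_ [A3 A13]].
    destruct (trig_final th2 th3 Hth2 Hth3 Hs2 Hs3 H23) as [_ [_ A23]].
    tauto. }
  destruct (L2 Hs1) as [[E24|[E24 [Hs2 H12]]] [E25|[E25 [Hs3 H13]]]].
  - rewrite E24, E25 in HJ1. lia.
  - destruct (L6 Hs3) as [[E68|[E68 [_ H31]]] [E69|[E69 [Hs2 H32]]]].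
    + rewrite E24, E25, E68, E69 in HJ1. lia.
    + destruct (L4 Hs2) as [[E46|[E46 [_ H23]]] [E47|[E47 [_ H21]]]].
      * rewrite E46, E47 in HJ1. lia.
      * apply Fin; auto; lra.
      * exfalso. apply (incompat v3 v4 v5 v6 v1); [rewrite E46|rewrite E69]; discriminate.
      * exfalso. apply (incompat v3 v4 v5 v6 v1); [rewrite E46|rewrite E69]; discriminate.
    + exfalso. apply (incompat v5 v6 v1 v2 v3); [rewrite E68|rewrite E25]; discriminate.
    + exfalso. apply (incompat v5 v6 v1 v2 v3); [rewrite E68|rewrite E25]; discriminate.
  - destruct (L4 Hs2) as [[E46|[E46 [Hs3 H23]]] [E47|[E47 [_ H21]]]].
    + rewrite E46, E47 in HJ1. lia.
    + exfalso. apply (incompat v1 v2 v3 v4 v5); [rewrite E24|rewrite E47]; discriminate.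
    + destruct (L6 Hs3) as [[E68|[E68 [_ H31]]] [E69|[E69 [_ H32]]]].
      * rewrite E24, E46, E47, E68, E69 in HJ1. lia.
      * exfalso. apply (incompat v3 v4 v5 v6 v1); [rewrite E46|rewrite E69]; discriminate.
      * rewrite E24, E25, E46, E47, E68, E69 in HJ1; lia.
      * exfalso. apply (incompat v3 v4 v5 v6 v1); [rewrite E46|rewrite E69]; discriminate.
    + exfalso. apply (incompat v1 v2 v3 v4 v5); [rewrite E24|rewrite E47]; discriminate.
  - rewrite E24, E25 in HJ1. lia.
Qed.
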